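(* Let $G_1$, $G_2$ be graphs. Then $G_1$ and $G_2$ have the same spectra with respect to $A$ and with respect to $\bar A$ if and only if $G_1^*$ and $G_2^*$ have the same spectra with respect to $A$ and with respect to $\bar A$; and the same holds with $A,\bar A$ replaced by $|L|, \overline{|L|}$. Similarly, $\phi_{ADJ}^{G_1}=\phi_{ADJ}^{G_2}$ if and only if $\phi_{ADJ}^{G_1^*}=\phi_{ADJ}^{G_2^*}$.
   Context: Graphs are finite and simple. For a graph, $A$ and $D$ are its adjacency and degree matrices, $|L| = D+A$ is its signless Laplacian; $\bar A$ and $\overline{|L|}$ denote the adjacency matrix and signless Laplacian of its complement. The cone $G^*$ is the join of $G$ with a single vertex, i.e., $G$ plus a new vertex adjacent to all vertices of $G$. The generalized characteristic polynomial of $G$ is $\phi^G_{ADJ}(\lambda,x,y)=\det(\lambda I - A + xD + yJ)$, where $J$ is the all-ones matrix. *)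

(* Defs.v *)
From HB Require Import structures.
From mathcomp Require Import all_boot all_order all_algebra.
Set Implicit Arguments. Unset Strict Implicit. Unset Printing Implicit Defensive.
Import GRing.Theory.
Local Open Scope ring_scope.

(* A (finite simple) graph on n vertices is a relation e : rel 'I_n which is
   symmetric and irreflexive (these hypotheses appear in the theorem). *)

Definition gcompl n (e : rel 'I_n) : rel 'I_n := fun i j => (i != j) && ~~ e i j.

(* Cone G^*: vertex set 'I_n.+1, new vertex ord_max adjacent to all old vertices. *)
Definition cone n (e : rel 'I_n) : rel 'I_n.+1 := fun i j =>
  match unlift ord_max i, unlift ord_max j with
  | Some i', Some j' => e i' j'
  | None, Some _ => true
  | Some _, None => true
  | None, None => false
  end.

Definition adjmx n (e : rel 'I_n) : 'M[int]_n := \matrix_(i, j) (e i j)%:R.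
Definition degmx n (e : rel 'I_n) : 'M[int]_n :=
  \matrix_(i, j) ((i == j)%:R * (#|[set k | e i k]|)%:R).
Definition slapmx n (e : rel 'I_n) : 'M[int]_n := degmx e + adjmx e.

(* Two matrices have the same spectrum iff they have the same characteristic
   polynomial (multiset of eigenvalues with multiplicities). *)
Definition cospectral n m (M : 'M[int]_n) (N : 'M[int]_m) : Prop :=
  char_poly M = char_poly N.

(* Generalized characteristic polynomial det(lambda I - A + x D + y J), as a
   trivariate polynomial in {poly {poly {poly int}}}:
   lambda = outermost variable, x = middle, y = innermost. *)
Notation poly3 := {poly {poly {poly int}}}.
Definition varL : poly3 := 'X.
Definition varX : poly3 := ('X)%:P.
Definition varY : poly3 := (('X)%:P)%:P.
Definition gcharpoly n (e : rel 'I_n) : poly3 :=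
  \det (varL%:M - map_mx (fun a : int => a%:~R) (adjmx e)
        + varX *: map_mx (fun a : int => a%:~R) (degmx e)
        + varY *: const_mx 1).

(* Main.v *)
Require Import Defs.
From HB Require Import structures.
From mathcomp Require Import all_boot all_order all_algebra.
From mathcomp Require Import ring lra zify.
Set Implicit Arguments. Unset Strict Implicit. Unset Printing Implicit Defensive.
Import GRing.Theory.
Local Open Scope ring_scope.


Section Bord.
Variable R : idomainType.

Definition bord n (M : 'M[R]_n) (u v : 'I_n -> R) (d : R) : 'M[R]_n.+1 :=
  \matrix_(i, j) match unlift ord_max i, unlift ord_max j with
  | Some i', Some j' => M i' j' | Some i', None => u i'
  | None, Some j' => v j' | None, None => d end.

Lemma bord_ll n M u v d (i j : 'I_n) :
  bord M u v d (lift ord_max i) (lift ord_max j) = M i j.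
Proof. by rewrite !mxE !liftK. Qed.
Lemma bord_lm n M u v d (i : 'I_n) : bord M u v d (lift ord_max i) ord_max = u i.
Proof. by rewrite !mxE !liftK unlift_none. Qed.
Lemma bord_ml n M u v d (j : 'I_n) : bord M u v d ord_max (lift ord_max j) = v j.
Proof. by rewrite !mxE !liftK unlift_none. Qed.
Lemma bord_mm n M u v d : bord (n:=n) M u v d ord_max ord_max = d.
Proof. by rewrite !mxE unlift_none. Qed.
Definition bordE := (bord_ll, bord_lm, bord_ml, bord_mm).

Definition sadj n (M : 'M[R]_n) (u v : 'I_n -> R) :=
  ((\row_j v j) *m \adj M *m (\col_i u i)) 0 0.

Lemma sum_ordS n (F : 'I_n.+1 -> R) :
  \sum_i F i = F ord_max + \sum_(i < n) F (lift ord_max i).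
Proof. by rewrite (bigD1_ord ord_max). Qed.

Lemma cof_max n (P : 'M[R]_n.+1) :
  cofactor P ord_max ord_max = \det (\matrix_(i, j) P (lift ord_max i) (lift ord_max j)).
Proof.
rewrite /cofactor /= addnn -signr_odd odd_double expr0 mul1r; congr (\det _).
by apply/matrixP => i j; rewrite !mxE.
Qed.

Lemma L0col n (P : 'M[R]_n.+1) : (forall i, P (lift ord_max i) ord_max = 0) ->
  \det P = P ord_max ord_max *
     \det (\matrix_(i, j) P (lift ord_max i) (lift ord_max j)).
Proof.
move=> H; rewrite (expand_det_col _ ord_max) sum_ordS big1 ?addr0 ?cof_max //.
by move=> i _; rewrite H mul0r.
Qed.

Lemma L0row n (P : 'M[R]_n.+1) : (forall j, P ord_max (lift ord_max j) = 0) ->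
  \det P = P ord_max ord_max *
     \det (\matrix_(i, j) P (lift ord_max i) (lift ord_max j)).
Proof.
move=> H; rewrite (expand_det_row _ ord_max) sum_ordS big1 ?addr0 ?cof_max //.
by move=> i _; rewrite H mul0r.
Qed.

Lemma T1 n (M : 'M[R]_n) u v d : \det M != 0 ->
  \det (bord M u v d) = d * \det M - sadj M u v.
Proof.
move=> nz.
set a := \adj M; set U := \col_i u i; set V := \row_j v j.
set w := fun i => - (a *m U) i 0.
pose Rm := bord a w (fun _ => 0) (\det M).
have dR : \det Rm = \det M * \det a.
  rewrite (L0row (P := Rm)) => [|j]; last by rewrite bordE.
  rewrite bordE; congr (_ * \det _); apply/matrixP => i j.
  by rewrite mxE bordE.
have dMa : \det M * \det a = \det M ^+ n.
  by rewrite -det_mulmx mul_mx_adj det_scalar.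
have MaU : forall i, \sum_k M i k * w k = - (\det M * u i).
  move=> i; have -> : \det M * u i = (M *m (a *m U)) i 0.
    by rewrite mulmxA mul_mx_adj mul_scalar_mx !mxE.
  by rewrite mxE -sumrN; apply: eq_bigr => k _; rewrite mulrN.
set B := bord M u v d.
have dBR : \det (B *m Rm) = (d * \det M - sadj M u v) * \det M ^+ n.
  rewrite (L0col (P := B *m Rm)) => [|i]; last first.
    rewrite mxE sum_ordS /Rm /B !bordE.
    under eq_bigr do rewrite !bordE.
    by rewrite MaU mulrC addrN.
  congr (_ * _).
    rewrite mxE sum_ordS /Rm /B !bordE.
    under eq_bigr do rewrite !bordE.
    rewrite /sadj -mulmxA mxE -sumrN mulrC; congr (_ + _).
    by apply: eq_bigr => k _; rewrite /w !mxE mulrN.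
  have -> : (\matrix_(i, j) (B *m Rm) (lift ord_max i) (lift ord_max j)) = (\det M)%:M.
    rewrite -mul_mx_adj; apply/matrixP => i j; rewrite !mxE sum_ordS /Rm /B !bordE.
    rewrite mulr0 add0r; apply: eq_bigr => k _; by rewrite !bordE.
  by rewrite det_scalar.
apply: (mulIf (expf_neq0 n nz)).
by rewrite -dBR det_mulmx dR dMa.
Qed.

Lemma T2 n (K : 'M[R]_n) u v : \det K != 0 ->
  \det (K - \matrix_(i, j) (u i * v j)) = \det K - sadj K u v.
Proof.
move=> nz.
pose E := bord 1%:M (fun _ => 0) (fun j => - v j) 1.
have dE : \det E = 1.
  rewrite (L0col (P := E)) => [|i]; last by rewrite bordE.
  rewrite bordE mul1r -(det1 R n); congr (\det _).
  by apply/matrixP => i j; rewrite mxE bordE !mxE.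
have : \det (bord K u v 1 *m E) = \det (K - \matrix_(i, j) (u i * v j)).
  rewrite (L0row (P := bord K u v 1 *m E)) => [|j]; last first.
    rewrite mxE sum_ordS !bordE mul1r.
    under eq_bigr do rewrite !bordE mxE.
    rewrite (bigD1 j) //= eqxx mulr1 big1 ?addr0 ?addNr // => k /negPf ->.
    by rewrite mulr0.
  rewrite mxE sum_ordS !bordE mulr1 big1 ?addr0 ?mul1r => [|k _]; last first.
    by rewrite !bordE mulr0.
  congr (\det _); apply/matrixP => i j; rewrite !mxE sum_ordS !bordE.
  under eq_bigr do rewrite !bordE mxE.
  rewrite (bigD1 j) //= eqxx mulr1 big1 ?addr0 => [|k /negPf ->]; last by rewrite mulr0.
  by rewrite mulrN addrC.
by rewrite det_mulmx dE mulr1 T1 // mul1r => <-.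
Qed.

Definition sumadj n (K : 'M[R]_n) := sadj K (fun _ => 1) (fun _ => 1).

Lemma T2c n (K : 'M[R]_n) c : \det K != 0 ->
  \det (K + const_mx c) = \det K + c * sumadj K.
Proof.
move=> nz.
have -> : K + const_mx c = K - \matrix_(i, j) ((fun _ => - c) i * (fun _ => 1) j).
  by apply/matrixP => i j; rewrite !mxE mulr1 opprK.
rewrite T2 // /sadj /sumadj.
have -> : \col_i (- c) = (- c) *: (\col_(i < n) (1 : R)).
  by apply/matrixP => i j; rewrite !mxE mulr1.
by rewrite -scalemxAr mxE mulNr opprK.
Qed.


Lemma bord_eq n (B : 'M[R]_n.+1) (M : 'M[R]_n) u v d :
  (forall i j, B (lift ord_max i) (lift ord_max j) = M i j) ->
  (forall i, B (lift ord_max i) ord_max = u i) ->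
  (forall j, B ord_max (lift ord_max j) = v j) ->
  B ord_max ord_max = d -> B = bord M u v d.
Proof.
move=> h1 h2 h3 h4; apply/matrixP => i j.
by case: (unliftP ord_max i) => [i'|] ->; case: (unliftP ord_max j) => [j'|] ->;
  rewrite bordE.
Qed.

Lemma sadj_const n (M : 'M[R]_n) x y :
  sadj M (fun _ => x) (fun _ => y) = x * y * sumadj M.
Proof.
rewrite /sadj /sumadj.
have -> : \col_i x = x *: (\col_(i < n) (1 : R)) by apply/matrixP => i j; rewrite !mxE mulr1.
have -> : \row_i y = y *: (\row_(i < n) (1 : R)) by apply/matrixP => i j; rewrite !mxE mulr1.
by rewrite -scalemxAr -!scalemxAl !mxE mulrA /sadj mxE.
Qed.

End Bord.


Lemma map_S (R R' : idomainType) (f : {rmorphism R -> R'}) n (M : 'M[R]_n) :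
  f (sumadj M) = sumadj (map_mx f M).
Proof.
rewrite /sumadj /sadj.
have -> : forall B : 'M[R]_1, f (B 0 0) = (map_mx f B) 0 0 by move=> B; rewrite mxE.
rewrite !map_mxM map_mx_adj; congr ((_ *m _ *m _) 0 0);
  by apply/matrixP => i j; rewrite !mxE rmorph1.
Qed.

Lemma compK (p q r : {poly int}) : q \Po r = 'X -> (p \Po q) \Po r = p.
Proof. by move=> h; rewrite -comp_polyA h comp_polyXr. Qed.

Lemma char_nz n (N : 'M[int]_n) : char_poly N != 0.
Proof. exact: monic_neq0 (char_poly_monic N). Qed.

Lemma comp_nz (p q r : {poly int}) : q \Po r = 'X -> p != 0 -> p \Po q != 0.
Proof.
move=> h; apply: contra => /eqP e; apply/eqP.
by rewrite -(compK p h) e comp_poly0.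
Qed.

Lemma GC n (N : 'M[int]_n) (a : int) :
  char_poly (a%:M - N + const_mx 1) =
  (-1) ^+ n * ((char_poly N + sumadj (char_poly_mx N)) \Po (a%:P - 'X)).
Proof.
set s := a%:P - 'X.
have ss : s \Po s = 'X.
  by rewrite /s rmorphB /= comp_polyC comp_polyX opprB addrC subrK.
pose K := map_mx (comp_poly s) (char_poly_mx N).
have eK : char_poly_mx (a%:M - N + const_mx 1) = (-1) *: (K + const_mx 1).
  apply/matrixP => i j; rewrite !mxE.
  case: (i == j); rewrite /= ?mulr1n ?mulr0n.
    by rewrite /s !(rmorphB, rmorphD, rmorph1) /= comp_polyX comp_polyC; ring.
  by rewrite /s !(rmorphB, rmorphD, rmorph1, rmorph0) /= comp_polyC; ring.
have dK : \det K = char_poly N \Po s by rewrite det_map_mx.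
rewrite /char_poly eK detZ T2c; last by rewrite dK; apply: comp_nz ss (char_nz N).
by rewrite dK -map_S mul1r rmorphD.
Qed.

Lemma GCone n (N : 'M[int]_n) (t b : int) :
  char_poly (bord (N + t%:M) (fun _ => 1) (fun _ => 1) b) =
  ('X - b%:P) * (char_poly N \Po ('X - t%:P)) - (sumadj (char_poly_mx N) \Po ('X - t%:P)).
Proof.
set s := 'X - t%:P.
have ss : s \Po ('X + t%:P) = 'X.
  by rewrite /s rmorphB /= comp_polyC comp_polyX addrK.
pose K := map_mx (comp_poly s) (char_poly_mx N).
have eK : char_poly_mx (bord (N + t%:M) (fun _ => 1) (fun _ => 1) b) =
   bord K (fun _ => -1) (fun _ => -1) ('X - b%:P).
  apply: bord_eq => [i j|i|j|].
  - rewrite !mxE !liftK (inj_eq (@lift_inj _ ord_max)) !mxE.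
    case: eqVneq => [->|_]; rewrite ?mulr1n ?mulr0n !(rmorphB, rmorphD, rmorph0) /=
       ?comp_polyX ?comp_polyC /s; ring.
  - by rewrite !mxE liftK unlift_none eq_sym (negPf (neq_lift _ _)) mulr0n sub0r.
  - by rewrite !mxE liftK unlift_none (negPf (neq_lift _ _)) mulr0n sub0r.
  - by rewrite !mxE unlift_none eqxx mulr1n.
have dK : \det K = char_poly N \Po s by rewrite det_map_mx.
rewrite /char_poly eK T1; last by rewrite dK; apply: comp_nz ss (char_nz N).
by rewrite dK sadj_const mulrNN !mul1r /K -map_S.
Qed.

Lemma GCC n (N : 'M[int]_n) :
  char_poly (bord N (fun _ => 0) (fun _ => 0) 0) = 'X * char_poly N.
Proof.
rewrite /char_poly (L0col (P := char_poly_mx _)) => [|i]; last first.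
  by rewrite !mxE liftK unlift_none eq_sym (negPf (neq_lift _ _)) mulr0n subr0.
rewrite !mxE unlift_none eqxx mulr1n subr0; congr (_ * \det _).
by apply/matrixP => i j; rewrite !mxE !liftK (inj_eq (@lift_inj _ ord_max)).
Qed.

Lemma card_setS n (P : pred 'I_n.+1) :
  #|[set k | P k]| = (P ord_max : nat) + #|[set k : 'I_n | P (lift ord_max k)]|.
Proof.
rewrite -!sum1_card !(big_mkcond (fun k => k \in _)) /= (bigD1_ord ord_max) //=.
by rewrite inE; congr (_ + _); apply: eq_bigr => k _; rewrite !inE.
Qed.

Lemma natb1 (R : nzRingType) : (true%:R : R) = 1. Proof. by []. Qed.
Lemma mulrnb1 (R : nzRingType) (x : R) : x *+ true = x. Proof. by []. Qed.
Lemma natb0 (R : nzRingType) : (false%:R : R) = 0. Proof. by []. Qed.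
Lemma mulrnb0 (R : nzRingType) (x : R) : x *+ false = 0. Proof. by []. Qed.

Section Graph.
Variables (n : nat) (e : rel 'I_n).
Hypothesis irr : irreflexive e.
Local Notation deg e i := (#|[set k | e i k]|).

Lemma cardC i : (deg (gcompl e) i + deg e i).+1 = n.
Proof.
have -> : [set k | gcompl e i k] = ~: (i |: [set k | e i k]).
  by apply/setP => k; rewrite !inE /gcompl negb_or eq_sym.
rewrite cardsCs setCK card_ord cardsU1 inE irr /=.
have := max_card (i |: [set k | e i k]); rewrite card_ord cardsU1 inE irr /=.
move=> h; rewrite add1n; lia.
Qed.

Lemma deg_cone_l i : deg (cone e) (lift ord_max i) = (deg e i).+1.
Proof.
rewrite card_setS /cone liftK unlift_none /=; apply: (congr1 (addn 1)).
by apply: eq_card => k; rewrite !inE !liftK.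
Qed.

Lemma deg_cone_m : deg (cone e) ord_max = n.
Proof.
rewrite card_setS /cone unlift_none /= -[RHS]card_ord -cardsT; apply: (congr1 (addn 0)).
by apply: eq_card => k; rewrite !inE !liftK.
Qed.

Lemma deg_ccone_l i : deg (gcompl (cone e)) (lift ord_max i) = deg (gcompl e) i.
Proof.
rewrite card_setS /gcompl /cone liftK unlift_none /= andbF; apply: (congr1 (addn 0)).
by apply: eq_card => k; rewrite !inE !liftK (inj_eq (@lift_inj _ ord_max)).
Qed.

Lemma deg_ccone_m : deg (gcompl (cone e)) ord_max = 0.
Proof.
rewrite card_setS /gcompl /cone unlift_none eqxx /=.
by rewrite (eq_card (B := set0)) ?cards0 // => k; rewrite !inE liftK andbF.
Qed.

Lemma adj_compl : adjmx (gcompl e) = (-1)%:M - adjmx e + const_mx 1.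
Proof.
apply/matrixP => i j; rewrite !mxE /gcompl.
case: eqVneq => [->|nij]; first by rewrite irr /= mulr1n subr0 addNr.
by rewrite /= mulr0n sub0r; case: (e i j); rewrite /= ?addNr ?subr0.
Qed.

Lemma adj_cone : adjmx (cone e) = bord (adjmx e + 0%:M) (fun _ => 1) (fun _ => 1) 0.
Proof.
apply: bord_eq => [i j|i|j|]; rewrite !mxE /cone ?liftK ?unlift_none //.
by rewrite mul0rn addr0.
Qed.

Lemma adj_ccone : adjmx (gcompl (cone e)) =
   bord (adjmx (gcompl e)) (fun _ => 0) (fun _ => 0) 0.
Proof.
apply: bord_eq => [i j|i|j|]; rewrite !mxE /gcompl /cone ?liftK ?unlift_none
   ?(inj_eq (@lift_inj _ ord_max)) ?andbF ?eqxx //.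
Qed.
Lemma slap_compl : slapmx (gcompl e) = (n%:R - 2)%:M - slapmx e + const_mx 1.
Proof.
apply/matrixP => i j; rewrite !mxE /gcompl.
case: eqVneq => [<-|nij]; last first.
  rewrite /= !mulr0n !mul0r !add0r.
  by case: (e i j) => /=; rewrite ?mulr1n ?mulr0n ?oppr0 ?add0r ?addNr.
rewrite irr /= !(natb1, mulrnb1, mul1r, addr0).
have hn : (n%:R : int) = ((deg (gcompl e) i + deg e i).+1)%:R by rewrite cardC.
rewrite hn /gcompl -addn1 !natrD.
lra.
Qed.

Lemma slap_cone : slapmx (cone e) = bord (slapmx e + 1%:M) (fun _ => 1) (fun _ => 1) n%:R.
Proof.
apply: bord_eq => [i j|i|j|]; rewrite !mxE ?deg_cone_l ?deg_cone_m /cone ?liftK ?unlift_none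
   ?(inj_eq (@lift_inj _ ord_max)).
- case: eqVneq => _; rewrite ?natb1 ?natb0 ?mul1r ?mul0r ?add0r ?addr0 //.
  by rewrite -addn1 natrD addrAC.
- by rewrite eq_sym (negPf (neq_lift _ _)) natb0 natb1 mul0r add0r.
- by rewrite (negPf (neq_lift _ _)) natb0 natb1 mul0r add0r.
- by rewrite eqxx natb1 natb0 mul1r addr0.
Qed.

Lemma slap_ccone : slapmx (gcompl (cone e)) =
   bord (slapmx (gcompl e)) (fun _ => 0) (fun _ => 0) 0.
Proof.
apply: bord_eq => [i j|i|j|]; rewrite !mxE ?deg_ccone_l ?deg_ccone_m /gcompl /cone ?liftK
   ?unlift_none ?(inj_eq (@lift_inj _ ord_max)) ?andbF ?mulr0 ?addr0 ?eqxx //.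
by rewrite eq_sym (negPf (neq_lift _ _)) natb0 mul0r.
Qed.

End Graph.

Lemma cosp_size n1 n2 (M1 : 'M[int]_n1) (M2 : 'M[int]_n2) :
  cospectral M1 M2 -> n1 = n2.
Proof. by rewrite /cospectral => h; have := congr1 (fun p : {poly int} => size p) h; rewrite !size_char_poly => -[]. Qed.

Lemma core n (c1 c2 W1 W2 : {poly int}) (a t b : int) :
  (c1 = c2 /\ (-1) ^+ n * ((c1 + W1) \Po (a%:P - 'X)) =
              (-1) ^+ n * ((c2 + W2) \Po (a%:P - 'X))) <->
  (('X - b%:P) * (c1 \Po ('X - t%:P)) - (W1 \Po ('X - t%:P)) =
   ('X - b%:P) * (c2 \Po ('X - t%:P)) - (W2 \Po ('X - t%:P)) /\
   'X * ((-1) ^+ n * ((c1 + W1) \Po (a%:P - 'X))) =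
   'X * ((-1) ^+ n * ((c2 + W2) \Po (a%:P - 'X)))).
Proof.
set sg := a%:P - 'X; set tau := 'X - t%:P.
have sgK : sg \Po sg = 'X.
  by rewrite /sg rmorphB /= comp_polyC comp_polyX opprB addrC subrK.
have tauK : tau \Po ('X + t%:P) = 'X.
  by rewrite /tau rmorphB /= comp_polyC comp_polyX addrK.
have sgI : forall p q, p \Po sg = q \Po sg -> p = q.
  by move=> p q h; rewrite -(compK p sgK) h compK.
have tauI : forall p q, p \Po tau = q \Po tau -> p = q.
  by move=> p q h; rewrite -(compK p tauK) h compK.
have sI := mulfI (negbT (signr_eq0 {poly int} n)).
split.
  case=> <- /sI /sgI /addrI <-; split=> //.
case=> h1 /(mulfI (negbT (polyX_eq0 _))) h2; have h3 := sgI _ _ (sI _ _ h2).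
split=> //.
have h4 : (c1 + W1) \Po tau = (c2 + W2) \Po tau by rewrite h3.
have e5 : ('X - (b - 1)%:P) * (c1 \Po tau) = ('X - (b - 1)%:P) * (c2 \Po tau).
  have r : forall p w : {poly int}, ('X - (b - 1)%:P) * (p \Po tau) =
      (('X - b%:P) * (p \Po tau) - (w \Po tau)) + ((p + w) \Po tau).
    by move=> p w; rewrite !rmorphB rmorphD /= polyC1; ring.
  by rewrite (r c1 W1) (r c2 W2) h1 h4.
exact: tauI (mulfI (negbT (polyXsubC_eq0 _)) e5).
Qed.

Lemma adj_main n (e1 e2 : rel 'I_n) (irr1 : irreflexive e1) (irr2 : irreflexive e2) :
  ((cospectral (adjmx e1) (adjmx e2) /\
    cospectral (adjmx (gcompl e1)) (adjmx (gcompl e2)))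
   <->
   (cospectral (adjmx (cone e1)) (adjmx (cone e2)) /\
    cospectral (adjmx (gcompl (cone e1))) (adjmx (gcompl (cone e2))))).
Proof.
rewrite /cospectral !adj_ccone !GCC !adj_compl // !GC !adj_cone !GCone.
exact: core.
Qed.

Lemma slap_main n (e1 e2 : rel 'I_n) (irr1 : irreflexive e1) (irr2 : irreflexive e2) :
  ((cospectral (slapmx e1) (slapmx e2) /\
    cospectral (slapmx (gcompl e1)) (slapmx (gcompl e2)))
   <->
   (cospectral (slapmx (cone e1)) (slapmx (cone e2)) /\
    cospectral (slapmx (gcompl (cone e1))) (slapmx (gcompl (cone e2))))).
Proof.
rewrite /cospectral !slap_ccone !GCC !slap_compl // !GC !slap_cone !GCone.
exact: core.
Qed.

Lemma adj_part n1 n2 (e1 : rel 'I_n1) (e2 : rel 'I_n2)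
  (irr1 : irreflexive e1) (irr2 : irreflexive e2) :
  ((cospectral (adjmx e1) (adjmx e2) /\
    cospectral (adjmx (gcompl e1)) (adjmx (gcompl e2)))
   <->
   (cospectral (adjmx (cone e1)) (adjmx (cone e2)) /\
    cospectral (adjmx (gcompl (cone e1))) (adjmx (gcompl (cone e2))))).
Proof.
split=> h.
  have E := cosp_size h.1; subst n2; exact: (proj1 (adj_main irr1 irr2) h).
have E : n1 = n2 by have := cosp_size h.2 => -[].
subst n2; exact: (proj2 (adj_main irr1 irr2) h).
Qed.

Lemma slap_part n1 n2 (e1 : rel 'I_n1) (e2 : rel 'I_n2)
  (irr1 : irreflexive e1) (irr2 : irreflexive e2) :
  ((cospectral (slapmx e1) (slapmx e2) /\
    cospectral (slapmx (gcompl e1)) (slapmx (gcompl e2)))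
   <->
   (cospectral (slapmx (cone e1)) (slapmx (cone e2)) /\
    cospectral (slapmx (gcompl (cone e1))) (slapmx (gcompl (cone e2))))).
Proof.
split=> h.
  have E := cosp_size h.1; subst n2; exact: (proj1 (slap_main irr1 irr2) h).
have E : n1 = n2 by have := cosp_size h.2 => -[].
subst n2; exact: (proj2 (slap_main irr1 irr2) h).
Qed.


Lemma compKg (R : idomainType) (p q r : {poly R}) : q \Po r = 'X -> (p \Po q) \Po r = p.
Proof. by move=> h; rewrite -comp_polyA h comp_polyXr. Qed.

Lemma char_nzg (R : idomainType) n (N : 'M[R]_n) : char_poly N != 0.
Proof. exact: monic_neq0 (char_poly_monic N). Qed.

Lemma addmxE' (R : nzRingType) m n (A B : 'M[R]_(m, n)) i j : (A + B) i j = A i j + B i j.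
Proof. by rewrite mxE. Qed.

Notation P2 := {poly {poly int}}.
Definition y2 : P2 := ('X)%:P.

Definition Nf n (e : rel 'I_n) : 'M[P2]_n :=
  \matrix_(i, j) ((adjmx e i j)%:~R - 'X * (degmx e i j)%:~R).

Lemma gch n (e : rel 'I_n) : gcharpoly e = char_poly (Nf e - const_mx y2).
Proof.
rewrite /gcharpoly /char_poly; congr (\det _); apply/matrixP => i j.
rewrite !mxE /varL /varX /varY.
rewrite !(rmorphB, rmorphD, rmorphM, rmorph_int) /=. ring.
Qed.

Lemma gch2 n (e : rel 'I_n) :
  gcharpoly e = char_poly (Nf e) + varY * sumadj (char_poly_mx (Nf e)).
Proof.
rewrite gch /char_poly -T2c ?char_nzg //; congr (\det _); apply/matrixP => i j.
by rewrite !mxE rmorphB /= /varY; ring.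
Qed.

Lemma gcone n (e : rel 'I_n) :
  char_poly_mx (Nf (cone e)) =
  bord (map_mx (comp_poly (varL + varX)) (char_poly_mx (Nf e)))
       (fun _ => -1) (fun _ => -1) (varL + varX * n%:R).
Proof.
apply: bord_eq => [i j|i|j|].
- rewrite !mxE deg_cone_l /cone !liftK (inj_eq (@lift_inj _ ord_max)).
  case: eqVneq => _; rewrite ?natb1 ?natb0 ?mulr1n ?mulr0n ?mul1r ?mul0r
     !(rmorphB, rmorphD, rmorphM, rmorph_int, rmorph_nat) /= ?comp_polyX ?comp_polyC
     /varL /varX; try ring.
- rewrite !mxE deg_cone_l /cone !liftK unlift_none eq_sym (negPf (neq_lift _ _)).
  by rewrite !natb0 ?mulr0n mul0r !(rmorphB, rmorphM, rmorph_int) /=; ring.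
- rewrite !mxE deg_cone_m /cone !liftK unlift_none (negPf (neq_lift _ _)).
  by rewrite !natb0 ?mulr0n mul0r !(rmorphB, rmorphM, rmorph_int) /=; ring.
- rewrite !mxE deg_cone_m /cone unlift_none eqxx natb1 natb0 mul1r mulr1n.
  by rewrite !(rmorphB, rmorphM, rmorph_int, rmorph_nat) /= /varL /varX; ring.
Qed.

Lemma gch_cone n (e : rel 'I_n) :
  gcharpoly (cone e) =
  ((varL + varX * n%:R) * (char_poly (Nf e) \Po (varL + varX))
     - (sumadj (char_poly_mx (Nf e)) \Po (varL + varX)))
  + varY * ((varL + varX * n%:R + 1) *
      ((char_poly (Nf e) \Po (varL + varX)) + (sumadj (char_poly_mx (Nf e)) \Po (varL + varX)))
    - ((varL + varX * n%:R) * (char_poly (Nf e) \Po (varL + varX))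
       - (sumadj (char_poly_mx (Nf e)) \Po (varL + varX)))).
Proof.
set s := varL + varX; set a := varL + varX * n%:R.
set f := char_poly (Nf e); set g := sumadj (char_poly_mx (Nf e)).
pose K := map_mx (comp_poly s) (char_poly_mx (Nf e)).
have sK : s \Po (varL - varX) = 'X.
  by rewrite /s /varL /varX rmorphD /= comp_polyX comp_polyC subrK.
have dK : \det K = f \Po s by rewrite det_map_mx.
have nzK : \det K != 0.
  rewrite dK; apply: contra (char_nzg (Nf e)) => /eqP h; apply/eqP.
  by rewrite -/f -(compKg f sK) h comp_poly0.
have SK : sumadj K = g \Po s by rewrite /K -map_S.
have nzB : \det (char_poly_mx (Nf (cone e))) != 0 := char_nzg _.
have dB : \det (char_poly_mx (Nf (cone e))) = a * (f \Po s) - (g \Po s).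
  by rewrite gcone -/s -/a -/K T1 // dK sadj_const mulrNN !mul1r SK.
have dB1 : \det (char_poly_mx (Nf (cone e)) + const_mx 1) = (a + 1) * ((f \Po s) + (g \Po s)).
  rewrite gcone -/s -/a -/K (L0col (P := _ + _)) => [|i]; last by rewrite mxE bordE mxE addNr.
  rewrite mxE bordE mxE -dK -SK -[sumadj K]mul1r -T2c //; congr (_ * \det _).
  by apply/matrixP => i j; rewrite mxE addmxE' bordE addmxE' !mxE.
have h := T2c 1 nzB; rewrite dB1 dB mul1r in h.
by rewrite gch2 /char_poly dB h [(_ + sumadj _)]addrC addrK.
Qed.

Definition ev1 : P2 -> P2 := map_poly (comp_poly (0 : {poly int})).
Definition ev0 : poly3 -> poly3 := map_poly ev1.

Lemma ev0L : ev0 varL = varL.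
Proof. by rewrite /ev0 /varL map_polyX. Qed.
Lemma ev0X : ev0 varX = varX.
Proof. by rewrite /ev0 /varX map_polyC /= /ev1 map_polyX. Qed.
Lemma ev0Y : ev0 varY = 0.
Proof. by rewrite /ev0 /varY map_polyC /= /ev1 map_polyC /= comp_polyX !rmorph0. Qed.

Lemma Nfix n (e : rel 'I_n) : map_mx ev1 (Nf e) = Nf e.
Proof.
apply/matrixP => i j; rewrite !mxE.
by rewrite /ev1 !(rmorphB, rmorphM, rmorph_int) /= map_polyX.
Qed.

Lemma ev0f n (e : rel 'I_n) : ev0 (char_poly (Nf e)) = char_poly (Nf e).
Proof. by rewrite /ev0 /char_poly -det_map_mx map_char_poly_mx Nfix. Qed.

Lemma ev0g n (e : rel 'I_n) : ev0 (sumadj (char_poly_mx (Nf e))) = sumadj (char_poly_mx (Nf e)).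
Proof. by rewrite /ev0 map_S map_char_poly_mx Nfix. Qed.

Lemma varY_nz : varY != 0.
Proof. by rewrite /varY !polyC_eq0 polyX_eq0. Qed.

Lemma sep (p1 p2 q1 q2 : poly3) : ev0 p1 = p1 -> ev0 p2 = p2 ->
  p1 + varY * q1 = p2 + varY * q2 -> p1 = p2 /\ q1 = q2.
Proof.
move=> h1 h2 h; have hp : p1 = p2.
  by have := congr1 ev0 h; rewrite /ev0 !rmorphD !rmorphM /= -/ev0 ev0Y !mul0r !addr0 h1 h2.
by split=> //; move: h; rewrite hp => /addrI /(mulfI varY_nz).
Qed.

Lemma gcore n (f1 f2 g1 g2 : poly3) :
  ev0 f1 = f1 -> ev0 f2 = f2 -> ev0 g1 = g1 -> ev0 g2 = g2 ->
  (f1 + varY * g1 = f2 + varY * g2 <->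
  ((varL + varX * n%:R) * (f1 \Po (varL + varX)) - (g1 \Po (varL + varX)))
  + varY * ((varL + varX * n%:R + 1) *
      ((f1 \Po (varL + varX)) + (g1 \Po (varL + varX)))
    - ((varL + varX * n%:R) * (f1 \Po (varL + varX)) - (g1 \Po (varL + varX)))) =
  ((varL + varX * n%:R) * (f2 \Po (varL + varX)) - (g2 \Po (varL + varX)))
  + varY * ((varL + varX * n%:R + 1) *
      ((f2 \Po (varL + varX)) + (g2 \Po (varL + varX)))
    - ((varL + varX * n%:R) * (f2 \Po (varL + varX)) - (g2 \Po (varL + varX))))).
Proof.
move=> ef1 ef2 eg1 eg2.
set s := varL + varX; set a := varL + varX * n%:R.
have ev0s : ev0 s = s.
  by rewrite /s /ev0 rmorphD /= -/ev0 ev0L ev0X.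
have ev0a : ev0 a = a by rewrite /a /ev0 rmorphD rmorphM rmorph_nat /= -/ev0 ev0L ev0X.
have sK : s \Po (varL - varX) = 'X.
  by rewrite /s /varL /varX rmorphD /= comp_polyX comp_polyC subrK.
have sI : forall p q, p \Po s = q \Po s -> p = q.
  by move=> p q h; rewrite -(compKg p sK) h compKg.
have a1 : a + 1 != 0.
  have -> : a + 1 = 'X - (- ('X * n%:R + 1))%:P.
    by rewrite /a /varL /varX !(rmorphN, rmorphD, rmorphM, rmorph_nat, rmorph1) /=; ring.
  exact: negbT (polyXsubC_eq0 _).
have ev0P : forall f g : poly3, ev0 f = f -> ev0 g = g ->
    ev0 (a * (f \Po s) - (g \Po s)) = a * (f \Po s) - (g \Po s).
  move=> f g hf hg.
  by rewrite /ev0 rmorphB rmorphM /= !map_comp_poly -/ev0 hf hg ev0s ev0a.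
split.
  by move/sep => [] // -> ->.
move/sep => [] //; try exact: ev0P.
move=> h0; rewrite h0 => /addIr /(mulfI a1) hs.
have r : forall f g : poly3, (a + 1) * (f \Po s) = (a * (f \Po s) - (g \Po s)) + ((f \Po s) + (g \Po s)).
  by move=> f g; ring.
have hf : f1 \Po s = f2 \Po s by apply: (mulfI a1); rewrite (r f1 g1) (r f2 g2) h0 hs.
have hg : g1 \Po s = g2 \Po s by move: hs; rewrite hf => /addrI.
by rewrite (sI _ _ hf) (sI _ _ hg).
Qed.

Lemma gmain n (e1 e2 : rel 'I_n) :
  gcharpoly e1 = gcharpoly e2 <-> gcharpoly (cone e1) = gcharpoly (cone e2).
Proof.
rewrite !gch_cone !gch2; apply: gcore; [exact: ev0f|exact: ev0f|exact: ev0g|exact: ev0g].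
Qed.

Lemma gsize n1 n2 (e1 : rel 'I_n1) (e2 : rel 'I_n2) :
  gcharpoly e1 = gcharpoly e2 -> n1 = n2.
Proof.
rewrite !gch => h; have := congr1 (fun p : poly3 => size p) h.
by rewrite !size_char_poly => -[].
Qed.

Local Close Scope ring_scope.
Unset Implicit Arguments.

Theorem corollary3p3 (n1 n2 : nat) (e1 : rel 'I_n1) (e2 : rel 'I_n2)
  (sym1 : symmetric e1) (irr1 : irreflexive e1)
  (sym2 : symmetric e2) (irr2 : irreflexive e2) :
  ((cospectral (adjmx e1) (adjmx e2) /\
    cospectral (adjmx (gcompl e1)) (adjmx (gcompl e2)))
   <->
   (cospectral (adjmx (cone e1)) (adjmx (cone e2)) /\
    cospectral (adjmx (gcompl (cone e1))) (adjmx (gcompl (cone e2)))))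
  /\
  ((cospectral (slapmx e1) (slapmx e2) /\
    cospectral (slapmx (gcompl e1)) (slapmx (gcompl e2)))
   <->
   (cospectral (slapmx (cone e1)) (slapmx (cone e2)) /\
    cospectral (slapmx (gcompl (cone e1))) (slapmx (gcompl (cone e2)))))
  /\
  (gcharpoly e1 = gcharpoly e2 <-> gcharpoly (cone e1) = gcharpoly (cone e2)).
Proof.
split; first exact: adj_part irr1 irr2.
split; first exact: slap_part irr1 irr2.
split=> h.
  have E := gsize h; subst n2; exact: (proj1 (gmain e1 e2) h).
have E : n1 = n2 by have := gsize h => -[].
subst n2; exact: (proj2 (gmain e1 e2) h).
Qed.
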